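(* Let $V$ be a topological real vector space and $f:V\to\mathbb{R}$ a non-negative function that is positively homogeneous ($f(\lambda x)=\lambda f(x)$ for all $x\in V$, $\lambda>0$). Then for any real number $\alpha>1$ the following are equivalent: (1) $f$ is continuous and $f^{\alpha}$ is strictly convex. (2) $f$ is continuous and strictly quasi-convex. (3) $f$ is strictly sub-convex and $f^{-1}(0)=\{0\}$.
   Context: Topological real vector spaces are not assumed Hausdorff. A function $g$ on a convex set $C$ is strictly convex if $g((1-t)x+ty)<(1-t)g(x)+tg(y)$ for all distinct $x,y\in C$, $t\in(0,1)$; it is strictly quasi-convex if $g((1-t)x+ty)<\max\{g(x),g(y)\}$ for all distinct $x,y\in C$, $t\in(0,1)$. For $f:C\to\mathbb{R}$ and $r\in\mathbb{R}$, $S_r(f)=\{x\in C: f(x)\le r\}$. For a subset $S$, $\mathrm{Aff}(S)$ is its affine hull; $\mathrm{ri}(S)$ and $\mathrm{rc}(S)$ are the interior and closure of $S$ in the subspace topology of $\mathrm{Aff}(S)$. $]x,y[=\{(1-t)x+ty: t\in[0,1]\}\setminus\{x,y\}$. A subset $C$ is strictly convex if for any two distinct $x,y\in\mathrm{rc}(C)$ one has $]x,y[\subseteq\mathrm{ri}(C)$. A function $f:C\to\mathbb{R}$ is strictly sub-convex if $S_r(f)$ is strictly convex for every $r\in\mathbb{R}$. *)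

(* Defs.v *)
From HB Require Import structures.
From mathcomp Require Import all_boot all_order all_algebra.
From mathcomp Require Import all_classical all_reals all_analysis.
Set Implicit Arguments.
Unset Strict Implicit.
Unset Printing Implicit Defensive.
Import Order.TTheory GRing.Theory Num.Theory.
Import numFieldTopology.Exports.
Local Open Scope classical_set_scope.
Local Open Scope ring_scope.

Section Defs.
Variables (R : realType) (V : topologicalLmodType R).

Definition strictly_convex_fun (g : V -> R) : Prop :=
  forall (x y : V) (t : R), x <> y -> 0 < t -> t < 1 ->
    g ((1 - t) *: x + t *: y) < (1 - t) * g x + t * g y.

Definition strictly_quasi_convex_fun (g : V -> R) : Prop :=
  forall (x y : V) (t : R), x <> y -> 0 < t -> t < 1 ->
    g ((1 - t) *: x + t *: y) < Num.max (g x) (g y).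

Definition sublevel (f : V -> R) (r : R) : set V := [set x | f x <= r].

Definition aff_hull (S : set V) : set V :=
  [set x | exists (n : nat) (p : 'I_n -> V) (w : 'I_n -> R),
     (forall i, S (p i)) /\ \sum_(i < n) w i = 1 /\
     x = \sum_(i < n) w i *: p i].

(* relative interior: interior of S in the subspace topology of Aff(S) *)
Definition rel_interior (S : set V) : set V :=
  [set x | aff_hull S x /\
     exists U : set V, open U /\ U x /\ U `&` aff_hull S `<=` S].

(* relative closure: closure of S in the subspace topology of Aff(S) *)
Definition rel_closure (S : set V) : set V :=
  [set x | aff_hull S x /\
     forall U : set V, open U -> U x -> U `&` S !=set0].

Definition open_segment (x y : V) : set V :=
  [set z | (exists2 t : R, 0 <= t <= 1 & z = (1 - t) *: x + t *: y)
           /\ z <> x /\ z <> y].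

Definition strictly_convex_set (C : set V) : Prop :=
  forall x y : V, rel_closure C x -> rel_closure C y -> x <> y ->
    open_segment x y `<=` rel_interior C.

Definition strictly_subconvex (f : V -> R) : Prop :=
  forall r : R, strictly_convex_set (sublevel f r).

Definition pos_homogeneous (f : V -> R) : Prop :=
  forall (x : V) (l : R), 0 < l -> f (l *: x) = l * f x.

End Defs.

(* Main.v *)
Require Import Defs.
From HB Require Import structures.
From mathcomp Require Import all_boot all_order all_algebra.
From mathcomp Require Import all_classical all_reals all_analysis.
From mathcomp Require Import ring lra.
Set Implicit Arguments.
Unset Strict Implicit.
Import Order.TTheory GRing.Theory Num.Theory.
Import numFieldTopology.Exports.
Local Open Scope classical_set_scope.
Local Open Scope ring_scope.

Import numFieldTopology.Exports.
Section RealPart.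
Variable R : realType.

Lemma expR_strict_conv (L b : R) : L != 0 -> 0 < b -> b < 1 ->
  expR (b * L) < b * expR L + (1 - b).
Proof.
move=> L0 b0 b1; set m := b * L.
have m0 : m != 0 by rewrite mulf_neq0 // gt_eqF.
have h1 : expR L = expR m * expR (L - m) by rewrite -expRD addrC subrK.
have h2 : 1 = expR m * expR (0 - m) by rewrite -expRD addrC subrK expR0.
have Lm0 : L - m != 0.
  by rewrite /m -{1}(mul1r L) -mulrBl mulf_neq0 // subr_eq0 gt_eqF.
have g1 := expR_gt1Dx Lm0.
have g2 : 1 + (0 - m) < expR (0 - m) by apply: expR_gt1Dx; rewrite sub0r oppr_eq0.
have em := expR_gt0 m.
have i1 : expR m * (1 + (L - m)) < expR L by rewrite h1 ltr_pM2l.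
have i2 : expR m * (1 + (0 - m)) < 1 by rewrite [X in _ < X]h2 ltr_pM2l.
have e : expR m = b * (expR m * (1 + (L - m))) + (1 - b) * (expR m * (1 + (0 - m))).
  rewrite /m; ring.
rewrite -subr_gt0 in b1; rewrite e -[X in _ < _ + X]mulr1; apply: ltrD; rewrite ltr_pM2l //.
Qed.

Lemma bernoulli_strict (al u : R) : 1 < al -> 0 <= u -> u != 1 ->
  1 + al * (u - 1) < u `^ al.
Proof.
move=> al1 u0 u1; have al0 : 0 < al by lra.
have [->|up] := eqVneq u 0.
  by rewrite powR0 ?gt_eqF //; lra.
have upos : 0 < u by rewrite lt_neqAle eq_sym up u0.
have lnu : ln u != 0 by rewrite ln_eq0.
have := @expR_strict_conv (al * ln u) (al^-1) (mulf_neq0 (lt0r_neq0 al0) lnu)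
  (ltac:(by rewrite invr_gt0)) (ltac:(by rewrite invf_lt1 // )).
rewrite mulrA mulVf ?gt_eqF // mul1r lnK ?posrE //.
have -> : expR (al * ln u) = u `^ al by rewrite /powR (negbTE up).
move=> h.
have h2 : al * u < al * (al^-1 * u `^ al + (1 - al^-1)) by rewrite ltr_pM2l.
have e : al * (al^-1 * u `^ al + (1 - al^-1)) = u `^ al + al - 1.
  by field; rewrite gt_eqF.
lra.
Qed.

Lemma tangent_strict (al m s : R) : 1 < al -> 0 < m -> 0 <= s -> s != m ->
  m `^ al + (al * m `^ al / m) * (s - m) < s `^ al.
Proof.
move=> al1 m0 s0 sm.
have u0 : 0 <= s / m by rewrite divr_ge0 // ltW.
have u1 : s / m != 1.
  apply: contra sm => /eqP h; apply/eqP.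
  by rewrite -[s](@divfK _ m) ?gt_eqF // h mul1r.
have B := bernoulli_strict al1 u0 u1.
have -> : s = m * (s / m) by rewrite mulrC divfK // gt_eqF.
rewrite powRM ?(ltW m0) //.
have mp : 0 < m `^ al := powR_gt0 al m0.
have : m `^ al * (1 + al * (s / m - 1)) < m `^ al * (s / m) `^ al by rewrite ltr_pM2l.
suff -> : m `^ al + al * m `^ al / m * (m * (s / m) - m) = m `^ al * (1 + al * (s / m - 1)) by [].
by field; rewrite gt_eqF.
Qed.

Lemma powR_strict_conv (al a b t : R) : 1 < al -> 0 <= a -> 0 <= b -> a != b ->
  0 < t -> t < 1 -> ((1 - t) * a + t * b) `^ al < (1 - t) * a `^ al + t * b `^ al.
Proof.
move=> al1 a0 b0 ab t0 t1; set m := (1 - t) * a + t * b.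
have t1' : 0 < 1 - t by lra.
have m0 : 0 < m.
  have [hab|hab|hab] := ltgtP a b.
  - have := mulr_gt0 t0 (ltac:(by rewrite subr_gt0) : 0 < b - a); rewrite /m; lra.
  - have := mulr_gt0 t1' (ltac:(by rewrite subr_gt0) : 0 < a - b); rewrite /m; lra.
  - by rewrite hab eqxx in ab.
have am : a != m.
  apply/eqP => h; move: ab; rewrite /m in h.
  have : t * (a - b) = 0 by lra.
  by move/eqP; rewrite mulf_eq0 (gt_eqF t0) /= subr_eq0 => ->.
have bm : b != m.
  apply/eqP => h; move: ab; rewrite /m in h.
  have : (1 - t) * (b - a) = 0 by lra.
  by move/eqP; rewrite mulf_eq0 (gt_eqF t1') /= subr_eq0 eq_sym => ->.
set K := al * m `^ al / m.
have ha := tangent_strict al1 m0 a0 am.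
have hb := tangent_strict al1 m0 b0 bm.
have e : m `^ al = (1 - t) * (m `^ al + K * (a - m)) + t * (m `^ al + K * (b - m)).
  by rewrite /m; ring.
rewrite e; apply: ltrD; rewrite ltr_pM2l //.
Qed.

End RealPart.

Section Top.
Variables (R : realType) (V : topologicalLmodType R).

Lemma cont_shift (x : V) (c : R) : (fun y => c *: (y - x)) @ x --> (0 : V).
Proof.
have -> : (0:V) = c *: (x - x) by rewrite subrr scaler0.
apply: (@continuous_comp V (R^o * V)%type V (fun y => (c, y - x)) (fun z => z.1 *: z.2)); last exact: scale_continuous.
apply: (@cvg_pair _ _ _ _ (nbhs (c : R^o))); first exact: cvg_cst.
apply: (@continuous_comp V (V * V)%type V (fun y => (y, x)) (fun z => z.1 - z.2)); last exact: sub_continuous.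
by apply: (@cvg_pair _ _ _ _ (nbhs x)); [exact: cvg_id | exact: cvg_cst].
Qed.

Lemma exists_gt1 (z : V) (U : set V) : open U -> U z ->
  exists l : R, 1 < l /\ U (l *: z).
Proof.
move=> oU Uz.
have h : (fun l : R^o => l *: z) @ (1 : R^o) --> z.
  rewrite -[X in _ --> X]scale1r.
  apply: (@continuous_comp R^o (R^o * V)%type V (fun l => (l, z)) (fun p => p.1 *: p.2)); last exact: scale_continuous.
  by apply: (@cvg_pair _ _ _ _ (nbhs (1 : R^o))); [exact: cvg_id | exact: cvg_cst].
have /h : nbhs z U by apply: open_nbhs_nbhs.
move=> /nbhs_ballP [e /= e0 He].
exists (1 + e / 2); split; first by rewrite ltrDl divr_gt0.
apply: He; rewrite -ball_normE /= opprD addrA subrr sub0r normrN ger0_norm; last by rewrite divr_ge0 // ltW.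
by rewrite ltr_pdivrMr // ltr_pMr // ltr1n.
Qed.

End Top.

Section F.
Variables (R : realType) (V : topologicalLmodType R) (f : V -> R).
Hypotheses (f_ge0 : forall x, 0 <= f x) (f_hom : pos_homogeneous f).

Lemma f0 : f 0 = 0.
Proof.
have := f_hom 0 (ltr0n R 2); rewrite scaler0 => h.
lra.
Qed.

Lemma seg_simpl (x : V) t : (1 - t) *: x + t *: x = x.
Proof. by rewrite -scalerDl subrK scale1r. Qed.

Lemma sqc_zero : strictly_quasi_convex_fun f -> forall x, f x = 0 -> x = 0.
Proof.
move=> H x fx; apply/eqP/negPn/negP => x0.
have h2 : (0 : V) <> 2 *: x.
  move/esym/eqP; rewrite scaler_eq0 (negbTE x0) orbF pnatr_eq0 //.
have := H 0 (2 *: x) (2^-1) h2 (ltac:(by rewrite invr_gt0)) (ltac:(by rewrite invf_lt1 // ltr1n)).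
rewrite scaler0 add0r scalerA mulVf ?pnatr_eq0 // scale1r fx f0.
rewrite f_hom ?ltr0n // fx mulr0.
by rewrite /Num.max ltxx ltxx.
Qed.

Definition wqc := forall (x y : V) t, 0 < t -> t < 1 ->
  f ((1 - t) *: x + t *: y) <= Num.max (f x) (f y).

Lemma subadd : wqc -> (forall x, f x = 0 -> x = 0) ->
  forall x y, f (x + y) <= f x + f y.
Proof.
move=> H fz x y.
have [->|x0] := eqVneq x 0; first by rewrite add0r f0 add0r.
have [->|y0] := eqVneq y 0; first by rewrite addr0 f0 addr0.
have ap : 0 < f x by rewrite lt0r f_ge0 andbT; apply: contra x0 => /eqP/fz ->.
have bp : 0 < f y by rewrite lt0r f_ge0 andbT; apply: contra y0 => /eqP/fz ->.
set a := f x; set b := f y.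
have abp : 0 < a + b by rewrite addr_gt0.
set t := b / (a + b).
have t0 : 0 < t by rewrite divr_gt0.
have t1 : t < 1 by rewrite ltr_pdivrMr // mul1r ltrDr.
have e : x + y = (a + b) *: ((1 - t) *: (a^-1 *: x) + t *: (b^-1 *: y)).
  rewrite scalerDr !scalerA.
  have -> : (a + b) * (1 - t) * a^-1 = 1 by rewrite /t; field; rewrite !gt_eqF.
  have -> : (a + b) * t * b^-1 = 1 by rewrite /t; field; rewrite !gt_eqF.
  by rewrite !scale1r.
rewrite e f_hom // -[X in _ <= X]mulr1 ler_pM2l //.
apply: (le_trans (H _ _ _ t0 t1)).
rewrite !f_hom ?invr_gt0 // -/a -/b !mulVf ?gt_eqF //.
Qed.

Lemma conv_bound : wqc -> (forall x, f x = 0 -> x = 0) ->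
  forall x y t, 0 < t -> t < 1 ->
  f ((1 - t) *: x + t *: y) <= (1 - t) * f x + t * f y.
Proof.
move=> H fz x y t t0 t1.
apply: (le_trans (subadd H fz _ _)).
by rewrite !f_hom // subr_gt0.
Qed.

Lemma sqc_wqc : strictly_quasi_convex_fun f -> wqc.
Proof.
move=> H x y t t0 t1.
have [->|xy] := eqVneq x y.
  by rewrite seg_simpl /Num.max ltxx.
by apply/ltW/H => //; apply/eqP.
Qed.


Lemma pw_le (al a b : R) : 1 < al -> 0 <= a -> a <= b -> a `^ al <= b `^ al.
Proof.
move=> al1 a0 ab; have al0 : 0 <= al by lra.
by apply: (ge0_ler_powR al0); rewrite ?nnegrE // (le_trans a0 ab).
Qed.

Lemma pw_lt (al a b : R) : 1 < al -> 0 <= a -> a < b -> a `^ al < b `^ al.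
Proof.
move=> al1 a0 ab; have al0 : 0 < al by lra.
by apply: (gt0_ltr_powR al0); rewrite ?nnegrE // (le_trans a0 (ltW ab)).
Qed.

Lemma dir12 (al : R) : 1 < al ->
  strictly_convex_fun (fun x => f x `^ al) -> strictly_quasi_convex_fun f.
Proof.
move=> al1 H x y t xy t0 t1.
have h := H x y t xy t0 t1; move: h => /=.
set z := (1 - t) *: x + t *: y => h.
rewrite ltNge; apply/negP => hm.
have t1' : 0 <= 1 - t by lra.
have [hxy|hxy] := leP (f x) (f y).
- rewrite max_r // in hm.
  have g1 := pw_le al1 (f_ge0 x) hxy.
  have g2 := pw_le al1 (f_ge0 y) hm.
  have := ler_wpM2l t1' g1; lra.
- rewrite max_l // in hm; last exact: ltW.
  have g1 := pw_le al1 (f_ge0 y) (ltW hxy).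
  have g2 := pw_le al1 (f_ge0 x) hm.
  have := ler_wpM2l (ltW t0) g1; lra.
Qed.

Lemma dir21 (al : R) : 1 < al ->
  strictly_quasi_convex_fun f -> strictly_convex_fun (fun x => f x `^ al).
Proof.
move=> al1 H x y t xy t0 t1 /=.
have W := sqc_wqc H; have fz := sqc_zero H.
have [e|ne] := eqVneq (f x) (f y).
- have h := H x y t xy t0 t1; rewrite e /Num.max ltxx in h.
  have := pw_lt al1 (f_ge0 _) h; rewrite e.
  by have -> : (1 - t) * f y `^ al + t * f y `^ al = f y `^ al by ring.
- apply: le_lt_trans (powR_strict_conv al1 (f_ge0 x) (f_ge0 y) ne t0 t1).
  exact: pw_le al1 (f_ge0 _) (conv_bound W fz x y t0 t1).
Qed.

Lemma aff_hull_self (S : set V) w : S w -> aff_hull S w.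
Proof.
move=> Sw; exists 1%N, (fun _ => w), (fun _ => 1); split => //; split.
  by rewrite big_ord1.
by rewrite big_ord1 scale1r.
Qed.

Lemma closure_sub r x : continuous f -> rel_closure (sublevel f r) x -> f x <= r.
Proof.
move=> cf [_ Hc]; rewrite leNgt; apply/negP => lt.
have op : open (f @^-1` [set s | r < s]).
  by move/continuousP: cf; apply; exact: open_gt.
have [w [/= rw wS]] := Hc _ op lt.
by move: wS; rewrite /sublevel /=; lra.
Qed.

Lemma dir23 : continuous f -> strictly_quasi_convex_fun f ->
  strictly_subconvex f /\ f @^-1` [set 0] = [set 0].
Proof.
move=> cf H; split; last first.
  apply/seteqP; split => x /=; first exact: sqc_zero.
  by move=> ->; exact: f0.
move=> r x y Hx Hy xy z [[t /andP [ta tb] ez] [zx zy]].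
have fx := closure_sub cf Hx; have fy := closure_sub cf Hy.
have t0 : t != 0 by apply: contra_not_neq zx => e; rewrite ez e subr0 scale1r scale0r addr0.
have t1 : t != 1 by apply: contra_not_neq zy => e; rewrite ez e subrr scale0r add0r scale1r.
have tp : 0 < t by rewrite lt_neqAle eq_sym t0.
have tq : t < 1 by rewrite lt_neqAle t1.
have hz : f z < r.
  rewrite ez; apply: (lt_le_trans (H x y t xy tp tq)).
  by rewrite ge_max fx fy.
split; first by apply: aff_hull_self; rewrite /sublevel /=; exact: ltW.
exists (f @^-1` [set s | s < r]); split.
  by move/continuousP: cf; apply; exact: open_lt.
split; first exact: hz.
by move=> w [/= hw _]; rewrite /sublevel /=; exact: ltW.
Qed.


Lemma aff_all r w : 0 < r -> aff_hull (sublevel f r) w.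
Proof.
move=> r0; set c := r / (f w + 1).
have fw1 : 0 < f w + 1 by have := f_ge0 w; lra.
have c0 : 0 < c by rewrite divr_gt0.
have cw : c * f w <= r.
  rewrite /c mulrAC ler_pdivrMr // ler_pM2l //; lra.
exists 2%N, (fun i : 'I_2 => if i == ord0 then c *: w else 0),
  (fun i : 'I_2 => if i == ord0 then c^-1 else 1 - c^-1); split.
  move=> i; case: (i == ord0); rewrite /sublevel /=.
    by rewrite f_hom.
  by rewrite f0 ltW.
rewrite !big_ord_recl !big_ord0 /=; split; first by rewrite addr0 addrC subrK.
by rewrite scaler0 !addr0 scalerA mulVf ?gt_eqF // scale1r.
Qed.

Lemma seg_diff (x y : V) t : (1 - t) *: x + t *: y - x = t *: (y - x).
Proof.
by rewrite scalerBl scale1r scalerBr addrAC [x - _]addrC addrK addrC.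
Qed.

Lemma seg_diff2 (x y : V) t : (1 - t) *: x + t *: y - y = (1 - t) *: (x - y).
Proof.
by rewrite scalerBr scalerBl scale1r scalerBl scale1r opprB addrA.
Qed.

Lemma in_closure r x : f x <= r -> rel_closure (sublevel f r) x.
Proof.
move=> fx; split; first exact: aff_hull_self.
by move=> U _ Ux; exists x.
Qed.

Lemma dir32_sqc : strictly_subconvex f -> (forall x, f x = 0 -> x = 0) ->
  strictly_quasi_convex_fun f.
Proof.
move=> H fz x y t xy t0 t1.
set r := Num.max (f x) (f y).
have fxr : f x <= r by rewrite le_max lexx.
have fyr : f y <= r by rewrite le_max lexx orbT.
have r0 : 0 < r.
  rewrite ltNge; apply/negP => hr.
  have hx : f x = 0 by have := f_ge0 x; lra.
  have hy : f y = 0 by have := f_ge0 y; lra.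
  by apply: xy; rewrite (fz _ hx) (fz _ hy).
set z := (1 - t) *: x + t *: y.
have seg : open_segment x y z.
  split; first by exists t => //; rewrite !ltW.
  split.
    move=> e; have := seg_diff x y t; rewrite -/z e subrr => /esym/eqP.
    rewrite scaler_eq0 gt_eqF //= subr_eq0 => /eqP e2; exact: xy (esym e2).
  move=> e; have := seg_diff2 x y t; rewrite -/z e subrr => /esym/eqP.
  rewrite scaler_eq0 (gt_eqF (ltac:(lra) : 0 < 1 - t)) /= subr_eq0 => /eqP; exact: xy.
have [_ [U [oU [Uz sub]]]] := H r x y (in_closure fxr) (in_closure fyr) xy z seg.
have [l [l1 Ul]] := exists_gt1 oU Uz.
have := sub (l *: z) (conj Ul (aff_all _ r0)); rewrite /sublevel /= f_hom; last lra.
have := f_ge0 z; nra.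
Qed.

Lemma nbhd0 : strictly_subconvex f -> (forall x, f x = 0 -> x = 0) ->
  exists U : set V, open U /\ U 0 /\ (forall w, U w -> f w <= 1).
Proof.
move=> H fz.
have [[x x0]|nx] := pselect (exists x : V, x != 0); last first.
  exists setT; split; first exact: openT; split => // w _.
  have -> : w = 0 by apply/eqP/negPn/negP => w0; apply: nx; exists w.
  by rewrite f0.
have pos u : u != 0 -> 0 < f u.
  by move=> u0; rewrite lt0r f_ge0 andbT; apply: contra u0 => /eqP/fz ->.
set P := f x; set Q := f (- x).
have Pp : 0 < P := pos _ x0.
have Qp : 0 < Q by apply: pos; rewrite oppr_eq0.
set p := P^-1 *: x; set q := Q^-1 *: (- x).
have fp : f p = 1 by rewrite /p f_hom ?invr_gt0 // mulVf ?gt_eqF.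
have fq : f q = 1 by rewrite /q f_hom ?invr_gt0 // mulVf ?gt_eqF.
have pq : p <> q.
  move=> /eqP; rewrite -subr_eq0 /p /q scalerN opprK -scalerDl scaler_eq0.
  by rewrite (negbTE x0) orbF gt_eqF // addr_gt0 ?invr_gt0.
set t := Q / (P + Q).
have PQ : 0 < P + Q by rewrite addr_gt0.
have seg : open_segment p q 0.
  split.
    exists t.
      apply/andP; split; first by rewrite /t divr_ge0 // ltW.
      rewrite /t ler_pdivrMr // mul1r; lra.
    rewrite /p /q !scalerA scalerN -scaleNr -scalerDl.
    suff -> : (1 - t) * P^-1 + - (t * Q^-1) = 0 by rewrite scale0r.
    by rewrite /t; field; rewrite !gt_eqF.
  split.
    by move/esym/eqP; rewrite /p scaler_eq0 (negbTE x0) orbF invr_eq0 gt_eqF.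
  by move/esym/eqP; rewrite /q scaler_eq0 oppr_eq0 (negbTE x0) orbF invr_eq0 gt_eqF.
have [_ [U [oU [U0 sub]]]] := H 1 p q (in_closure (ltac:(by rewrite fp) : f p <= 1)) (in_closure (ltac:(by rewrite fq) : f q <= 1)) pq 0 seg.
exists U; split => //; split => // w Uw.
exact: sub w (conj Uw (aff_all _ ltr01)).
Qed.

Lemma dir32 : strictly_subconvex f -> f @^-1` [set 0] = [set 0] ->
  continuous f /\ strictly_quasi_convex_fun f.
Proof.
move=> H Hpre.
have fz : forall x, f x = 0 -> x = 0.
  by move=> x fx; have : (f @^-1` [set 0]) x by []; rewrite Hpre.
have S := dir32_sqc H fz; split => //.
have sa := subadd (sqc_wqc S) fz.
have [U [oU [U0 sub]]] := nbhd0 H fz.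
move=> x; apply/cvgrPdist_lt => e e0.
set c := 2 / e.
have c0 : 0 < c by rewrite divr_gt0.
have nU : nbhs (0 : V) U by apply: open_nbhs_nbhs.
have h1 := cont_shift x c nU.
have h2 := cont_shift x (- c) nU.
near=> y.
have A : U (c *: (y - x)) by near: y.
have B : U ((- c) *: (y - x)) by near: y.
have fA := sub _ A; have fB := sub _ B.
rewrite f_hom // in fA.
rewrite scaleNr -scalerN opprB f_hom // in fB.
have bnd u : c * f u <= 1 -> f u <= e / 2.
  move=> hu; have := ler_wpM2l (ltW (ltac:(by rewrite divr_gt0) : 0 < e / 2)) hu.
  by rewrite mulrA (_ : e / 2 * c = 1) ?mul1r ?mulr1 // /c; field; rewrite gt_eqF.
have g1 := bnd _ fA; have g2 := bnd _ fB.
have s1 : f y <= f x + f (y - x) by rewrite -{1}(subrK x y) addrC sa.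
have s2 : f x <= f y + f (x - y) by rewrite -{1}(subrK y x) addrC sa.
rewrite ltr_norml; apply/andP; split; lra.
Unshelve. all: by end_near.
Qed.

End F.

Theorem mainTheorem3 (R : realType) (V : topologicalLmodType R) (f : V -> R)
  (f_ge0 : forall x, 0 <= f x) (f_hom : pos_homogeneous f)
  (alpha : R) (alpha_gt1 : 1 < alpha) :
  ((continuous f /\ strictly_convex_fun (fun x => f x `^ alpha)) <->
   (continuous f /\ strictly_quasi_convex_fun f)) /\
  ((continuous f /\ strictly_quasi_convex_fun f) <->
   (strictly_subconvex f /\ f @^-1` [set 0] = [set 0])).
Proof.
split; split.
- by move=> [cf h]; split => //; exact: (dir12 f_ge0 alpha_gt1 h).
- by move=> [cf h]; split => //; exact: (dir21 f_ge0 f_hom alpha_gt1 h).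
- by move=> [cf h]; exact: (dir23 f_hom cf h).
- by move=> [h1 h2]; exact: (dir32 f_ge0 f_hom h1 h2).
Qed.
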